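(* Let $\mathbf{z}\sim\mathcal{N}(\mathbf{0},\mathbf{I}_{d\times d})$, $\mathbf{x}\in\mathbb{R}^d$, $y=\langle\mathbf{x},\mathbf{z}\rangle$, and let $\mathbf{D}^*=[\mathbf{v}_1,\dots,\mathbf{v}_n]\in\mathbb{R}^{d\times n}$ be column-orthogonal, with queries $q_i=\langle\mathbf{v}_i,\mathbf{z}\rangle$ whose observed values are $r_i$. If $\mathbf{D}=[\mathbf{d}_1,\dots,\mathbf{d}_n]=\mathbf{D}^*$, then $$f_{\mathbf{D}}\big(\mathbf{x},\{r_{\pi(i)}\}_{i=1}^k\big)=\sum_{i\in S}\langle\mathbf{d}_i,\mathbf{x}\rangle r_i,$$ where $S=\arg\max_{T\subseteq[n],|T|\le k}\sum_{i\in T}|\langle\mathbf{d}_i,\mathbf{x}\rangle|$ is the set of indices of the $k$ largest values of $|\langle\mathbf{d}_i,\mathbf{x}\rangle|$.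
   Context: Column-orthogonal means $\mathbf{A}^\top\mathbf{A}=\mathbf{I}$. For a query feature matrix $\mathbf{D}$, the IP-OMP selection rule $\pi:[k]\to[n]$ is defined iteratively for $t=1,\dots,k$ by $\pi(t)=\arg\max_i \frac{|\langle\Pi^\perp_{t-1}\mathbf{d}_i,\Pi^\perp_{t-1}\mathbf{x}\rangle|}{\|\Pi^\perp_{t-1}\mathbf{d}_i\|_2\|\Pi^\perp_{t-1}\mathbf{x}\|_2}$ over not-yet-selected indices, with $\Pi^\perp_{t-1}$ the orthogonal projection onto the orthogonal complement of the span of $\mathbf{d}_{\pi(1)},\dots,\mathbf{d}_{\pi(t-1)}$. $f_{\mathbf{D}}(\mathbf{x},\{r_{\pi(i)}\}_{i=1}^k)$ is the maximum likelihood estimator of $y$ given $q_{\pi(i)}=r_{\pi(i)}$ for $i=1,\dots,k$, where $\pi$ is the IP-OMP selection computed with $\mathbf{D}$. *)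

(* Defs.v *)
From HB Require Import structures.
From mathcomp Require Import all_boot all_order all_algebra.
From mathcomp Require Import reals sequences exp.
Set Implicit Arguments. Unset Strict Implicit. Unset Printing Implicit Defensive.
Import Order.TTheory GRing.Theory Num.Theory.
Local Open Scope ring_scope.

Section IPOMP.
Variable R : realType.

Definition ip (d : nat) (a b : 'cV[R]_d) : R := (a^T *m b) 0 0.
Definition vnorm (d : nat) (a : 'cV[R]_d) : R := Num.sqrt (ip a a).

(* Orthogonal projection of w onto the column space of B:
   B a where a solves the normal equations B^T B a = B^T w
   (pinvmx is a generalized inverse on the row space). *)
Definition proj_col (d m : nat) (B : 'M[R]_(d, m)) (w : 'cV[R]_d) : 'cV[R]_d :=
  ((w^T *m B *m pinvmx (B^T *m B)) *m B^T)^T.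

(* D with the columns outside A set to 0: its column span is span{d_i : i in A}. *)
Definition selcols (d n : nat) (D : 'M[R]_(d, n)) (A : {set 'I_n}) : 'M[R]_(d, n) :=
  D *m diag_mx (\row_i (i \in A)%:R).

Definition perp_proj (d n : nat) (D : 'M[R]_(d, n)) (A : {set 'I_n}) (w : 'cV[R]_d)
  : 'cV[R]_d := w - proj_col (selcols D A) w.

(* The IP-OMP score of index i after having selected the set A
   (division by 0 yields 0, MathComp convention). *)
Definition ipomp_score (d n : nat) (D : 'M[R]_(d, n)) (x : 'cV[R]_d)
  (A : {set 'I_n}) (i : 'I_n) : R :=
  `| ip (perp_proj D A (col i D)) (perp_proj D A x) |
  / (vnorm (perp_proj D A (col i D)) * vnorm (perp_proj D A x)).

(* pi : [k] -> [n] (0-based) is an IP-OMP selection sequence for D and x: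
   pi(s) is never a previously selected index and maximizes the score
   among the not-yet-selected indices (any tie-breaking allowed). *)
Definition ipomp_sel (d n k : nat) (D : 'M[R]_(d, n)) (x : 'cV[R]_d)
  (pi : 'I_k -> 'I_n) : Prop :=
  injective pi /\
  forall s : 'I_k,
    let A := [set pi j | j : 'I_k & (j < s)%N] in
    forall i : 'I_n, i \notin A -> ipomp_score D x A i <= ipomp_score D x A (pi s).

Definition is_topk (d n : nat) (D : 'M[R]_(d, n)) (x : 'cV[R]_d) (k : nat)
  (S : {set 'I_n}) : Prop :=
  (#|S| <= k)%N /\
  forall T : {set 'I_n}, (#|T| <= k)%N ->
    \sum_(i in T) `| ip (col i D) x | <= \sum_(i in S) `| ip (col i D) x |.

(* Density (up to a positive constant) of a centered Gaussian N(0, Sigma) on R^m,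
   taken w.r.t. Lebesgue measure on its support (the range of Sigma):
   exp(-1/2 w Sigma^+ w^T) on the support, 0 outside.  For invertible Sigma
   this is the usual Gaussian density up to its normalizing constant. *)
Definition gauss_dens (m : nat) (Sigma : 'M[R]_m) (w : 'rV[R]_m) : R :=
  if (w <= Sigma)%MS then expR (- ((w *m pinvmx Sigma *m w^T) 0 0) / 2) else 0.

(* z ~ N(0, I_d); the random vector (y, q_{pi 1}, ..., q_{pi k}) equals M^T z
   with M = [x | d_{pi 1} | ... | d_{pi k}], hence is N(0, M^T M). *)
Definition query_mx (d n k : nat) (D : 'M[R]_(d, n)) (x : 'cV[R]_d)
  (pi : 'I_k -> 'I_n) : 'M[R]_(d, 1 + k) :=
  row_mx x (\matrix_(i < d, j < k) D i (pi j)).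

Definition joint_cov (d n k : nat) (D : 'M[R]_(d, n)) (x : 'cV[R]_d)
  (pi : 'I_k -> 'I_n) : 'M[R]_(1 + k) :=
  (query_mx D x pi)^T *m query_mx D x pi.

(* t is a maximum-likelihood estimate of y given q_{pi j} = r_{pi j}, j < k:
   t maximizes the joint density of (y, q_pi) at (t, r_pi), equivalently the
   conditional density of y given the observations. *)
Definition is_MLE (d n k : nat) (D : 'M[R]_(d, n)) (x : 'cV[R]_d)
  (pi : 'I_k -> 'I_n) (r : 'I_n -> R) (t : R) : Prop :=
  let obs := fun u : R => row_mx (u%:M : 'M[R]_1) (\row_(j < k) r (pi j)) in
  0 < gauss_dens (joint_cov D x pi) (obs t) /\
  forall u : R, gauss_dens (joint_cov D x pi) (obs u)
                <= gauss_dens (joint_cov D x pi) (obs t).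

End IPOMP.

(* Main.v *)
Require Import Defs.
From HB Require Import structures.
From mathcomp Require Import all_boot all_order all_algebra.
From mathcomp Require Import reals sequences exp.
From mathcomp Require Import ring.
Import Order.TTheory GRing.Theory Num.Theory.
Local Open Scope ring_scope.

Lemma colT_selcols (R : realType) d n (D : 'M[R]_(d,n)) (A : {set 'I_n}) i :
  D^T *m D = 1%:M -> i \notin A -> (col i D)^T *m selcols D A = 0.
Proof.
move=> DD iA; rewrite /selcols tr_col mulmxA -row_mul DD.
apply/matrixP=> a j; rewrite mul_mx_diag !mxE.
case: (eqVneq i j) => [<-|ne]; first by rewrite (negPf iA) mulr0.
by rewrite mul0r.
Qed.

Lemma ip_perp (R : realType) d n (D : 'M[R]_(d,n)) (A : {set 'I_n}) i w :
  D^T *m D = 1%:M -> i \notin A -> ip (col i D) (perp_proj D A w) = ip (col i D) w.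
Proof.
move=> DD iA; rewrite /ip /perp_proj /proj_col trmx_mul trmxK mulmxBr mulmxA.
by rewrite colT_selcols // mul0mx subr0.
Qed.

Lemma perp_col (R : realType) d n (D : 'M[R]_(d,n)) (A : {set 'I_n}) i :
  D^T *m D = 1%:M -> i \notin A -> perp_proj D A (col i D) = col i D.
Proof.
move=> DD iA; rewrite /perp_proj /proj_col.
by rewrite colT_selcols // !mul0mx trmx0 subr0.
Qed.

Lemma ip_col_col (R : realType) d n (D : 'M[R]_(d,n)) i :
  D^T *m D = 1%:M -> ip (col i D) (col i D) = 1.
Proof.
move=> DD; have : (D^T *m D) i i = 1 by rewrite DD mxE eqxx.
rewrite /ip !mxE => <-; by apply: eq_bigr => l _; rewrite !mxE.
Qed.

Lemma ip_ge0 (R : realType) d (a : 'cV[R]_d) : 0 <= ip a a.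
Proof. rewrite /ip mxE; apply: sumr_ge0 => l _; rewrite !mxE; by rewrite -expr2 sqr_ge0. Qed.

Lemma ip_eq0 (R : realType) d (a : 'cV[R]_d) : ip a a = 0 -> a = 0.
Proof.
rewrite /ip mxE => h.
have h2 : forall l, (a^T) 0 l * a l 0 = 0.
  move=> l; apply: (psumr_eq0P _ h) => // m _; by rewrite mxE -expr2 sqr_ge0.
apply/matrixP => l j; rewrite ord1 mxE.
by have /eqP := h2 l; rewrite mxE mulf_eq0 orbb => /eqP.
Qed.

Lemma greedy_step (R : realType) d n (D : 'M[R]_(d,n)) x (A : {set 'I_n}) i j :
  D^T *m D = 1%:M -> i \notin A -> j \notin A ->
  ipomp_score D x A i <= ipomp_score D x A j ->
  `|ip (col i D) x| <= `|ip (col j D) x|.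
Proof.
move=> DD iA jA; rewrite /ipomp_score !perp_col // !ip_perp //.
rewrite /(vnorm (col i D)) /(vnorm (col j D)) !ip_col_col // sqrtr1 !mul1r.
have N0 : 0 <= vnorm (perp_proj D A x) by exact: sqrtr_ge0.
case: (eqVneq (vnorm (perp_proj D A x)) 0) => [N00|Nn0].
  move: N00 => /eqP; rewrite sqrtr_eq0 => hle _.
  have hz : perp_proj D A x = 0.
    by apply: ip_eq0; apply/eqP; rewrite eq_le hle ip_ge0.
  by rewrite -(@ip_perp R d n D A i x DD iA) hz /ip mulmx0 mxE normr0.
have Np : 0 < vnorm (perp_proj D A x) by rewrite lt_def Nn0.
by rewrite ler_pM2r // invr_gt0.
Qed.

Lemma topk_gen (R : realType) n (a : 'I_n -> R) (S T : {set 'I_n}) :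
  (forall i, 0 <= a i) -> (forall i j, i \notin S -> j \in S -> a i <= a j) ->
  (#|T| <= #|S|)%N ->
  \sum_(i in T) a i <= \sum_(i in S) a i.
Proof.
move=> a0 hS hT.
rewrite [X in X <= _](big_setID S) [X in _ <= X](big_setID T) /= setIC lerD2l.
set c := \big[Order.max/0]_(i in T :\: S) a i.
have c0 : 0 <= c.
  by rewrite /c; elim/big_ind: _ => // u v hu hv; rewrite le_max hu.
have aT : forall i, i \in T :\: S -> a i <= c.
  by move=> i hi; rewrite /c; apply: (le_bigmax_cond _ _ hi).
have cS : forall j, j \in S :\: T -> c <= a j.
  move=> j; rewrite inE => /andP[_ jS]; rewrite /c.
  apply: bigmax_le => // i; rewrite inE => /andP[iS _]; exact: hS.
have hc : (#|T :\: S| <= #|S :\: T|)%N.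
  move: hT; rewrite -(cardsID S T) -(cardsID T S) setIC leq_add2l //.
apply: (@le_trans _ _ (\sum_(i in T :\: S) c)); first exact: ler_sum.
rewrite sumr_const.
apply: (@le_trans _ _ (c *+ #|S :\: T|)); first exact: ler_wpMn2l.
by rewrite -sumr_const; apply: ler_sum.
Qed.

Lemma topk_part (R : realType) d n k (D : 'M[R]_(d,n)) x (pi : 'I_k -> 'I_n) :
  D^T *m D = 1%:M -> ipomp_sel D x pi -> is_topk D x k [set pi j | j : 'I_k].
Proof.
move=> DD [inj sel].
have cardS : #|[set pi j | j : 'I_k]| = k by rewrite card_imset // card_ord.
split; first by rewrite cardS.
move=> T hT; apply: topk_gen; last by rewrite cardS.
  by move=> i; apply: normr_ge0.
move=> i j iS /imsetP[s _ ->].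
have := sel s i; set A := [set pi j0 | j0 : 'I_k & (j0 < s)%N] => hsel.
have iA : i \notin A.
  by apply: contra iS => /imsetP[j' _ ->]; apply: imset_f.
have sA : pi s \notin A.
  apply/imsetP => -[j' hj' /inj eq]; move: hj'; rewrite inE -eq ltnn //.
exact: (@greedy_step R d n D x A i (pi s) DD iA sA (hsel iA)).
Qed.
Lemma L1 (R : realType) d k (x : 'cV[R]_d) (E : 'M[R]_(d,k)) (a : 'M[R]_1) (b : 'rV[R]_k) :
  E^T *m E = 1%:M ->
  row_mx a b *m ((row_mx x E)^T *m row_mx x E) =
  row_mx (a *m (x^T *m x) + b *m (E^T *m x)) (a *m (E^T *m x)^T + b).
Proof.
move=> EE; rewrite mulmxA tr_row_mx mul_row_col mul_mx_row !mulmxDl -!mulmxA EE mulmx1.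
by rewrite trmx_mul trmxK.
Qed.

Lemma mle_gen (R : realType) d k (x : 'cV[R]_d) (E : 'M[R]_(d,k)) (rho : 'rV[R]_k) (t : R) :
  E^T *m E = 1%:M ->
  let Sigma := (row_mx x E)^T *m row_mx x E in
  let obs := fun u : R => row_mx (u%:M : 'M[R]_1) rho in
  (0 < gauss_dens Sigma (obs t) /\
   forall u, gauss_dens Sigma (obs u) <= gauss_dens Sigma (obs t))
  <-> t = (rho *m (E^T *m x)) 0 0.
Proof.
move=> EE Sigma obs.
set B := E^T *m x; set C := x^T *m x.
pose s := (C - B^T *m B) 0 0.
have Cs : C - B^T *m B = s%:M by apply: mx11_scalar.
pose pb := (rho *m B) 0 0.
have pbE : rho *m B = pb%:M by apply: mx11_scalar.
have xE : x^T *m E = B^T by rewrite /B trmx_mul trmxK.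
have s0 : 0 <= s.
  have U : (x - E *m B)^T *m (x - E *m B) = C - B^T *m B.
    rewrite [(x - E *m B)^T]raddfB /= [(E *m B)^T]trmx_mul mulmxBl !mulmxBr.
    rewrite -/C mulmxA xE -[B^T *m E^T *m x]mulmxA -/B.
    rewrite -[B^T *m E^T *m (E *m B)]mulmxA [E^T *m (E *m B)]mulmxA EE mul1mx.
    by rewrite subrr subr0.
  have -> : s = ip (x - E *m B) (x - E *m B) by rewrite /ip U.
  exact: ip_ge0.
have SigT : Sigma^T = Sigma by rewrite /Sigma trmx_mul trmxK.
have Q : forall (w v : 'rV[R]_(1 + k)), w = v *m Sigma ->
    (w *m pinvmx Sigma *m w^T) 0 0 = (w *m v^T) 0 0.
  move=> w v hw.
  have wS : (w <= Sigma)%MS by rewrite hw submxMl.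
  by rewrite {2}hw trmx_mul SigT mulmxA (mulmxKpV wS).
set q := rho *m rho^T.
have F1 : forall u, (s != 0) || (u == pb) ->
    (obs u <= Sigma)%MS /\
    (obs u *m pinvmx Sigma *m (obs u)^T) 0 0 = q 0 0 + (u - pb)^+2 / s.
  move=> u hu; pose al := (u - pb) / s.
  pose v := row_mx (al%:M : 'M[R]_1) (rho - al *: B^T).
  have hv : obs u = v *m Sigma.
    rewrite /v /Sigma L1 // -/B -/C /obs; congr row_mx.
      rewrite mul_scalar_mx mulmxBl -scalemxAl addrCA -scalerBr Cs pbE.
      rewrite scale_scalar_mx -raddfD /=; congr scalar_mx.
      case/orP: hu => [sn0|/eqP ue]; first by rewrite /al divfK // addrC subrK.
      by rewrite /al ue subrr !mul0r addr0.
    by rewrite mul_scalar_mx addrC subrK.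
  split; first by rewrite hv submxMl.
  rewrite (Q _ _ hv) /v /obs tr_row_mx mul_row_col tr_scalar_mx mul_scalar_mx.
  rewrite raddfB /= linearZ /= trmxK mulmxBr -scalemxAr pbE -/q.
  rewrite !mxE /= !mulr1n /al.
  by ring.
have F2 : forall u, s = 0 -> (obs u <= Sigma)%MS -> u = pb.
  move=> u s00 /submxP[v hv]; move: hv.
  rewrite -(hsubmxK v) /Sigma L1 // -/B -/C /obs => /eq_row_mx[h1 h2].
  have : u%:M = lsubmx v *m (C - B^T *m B) + rho *m B.
    by rewrite h1 h2 mulmxBr mulmxDl [lsubmx v *m (B^T *m B)]mulmxA addrA subrK.
  rewrite Cs s00 pbE raddf0 mulmx0 add0r => /(congr1 (fun M : 'M[R]_1 => M 0 0)).
  by rewrite !mxE !mulr1n.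
have D1 : forall u, (obs u <= Sigma)%MS ->
    gauss_dens Sigma (obs u) = expR (- (q 0 0 + (u - pb)^+2 / s) / 2).
  move=> u hu; rewrite /gauss_dens hu.
  have hh : (s != 0) || (u == pb).
    by case: (eqVneq s 0) => //= h; apply/eqP; apply: F2.
  by case: (F1 u hh) => _ ->.
have D0 : forall u, ~~ (obs u <= Sigma)%MS -> gauss_dens Sigma (obs u) = 0.
  by move=> u hu; rewrite /gauss_dens (negPf hu).
have Mpb : (obs pb <= Sigma)%MS by case: (F1 pb); rewrite ?eqxx ?orbT.
have Dpb : gauss_dens Sigma (obs pb) = expR (- q 0 0 / 2).
  by rewrite D1 // subrr expr0n /= mul0r addr0.
have h2 : 0 < (2 : R)^-1 by rewrite invr_gt0 ltr0n.
rewrite -/pb; split.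
  move=> [pos all].
  have Mt : (obs t <= Sigma)%MS.
    by case: (boolP (obs t <= Sigma)%MS) => // h; rewrite D0 // ltxx in pos.
  case: (eqVneq s 0) => [s00|sn0]; first exact: F2.
  have sp : 0 < s by rewrite lt_def sn0.
  have := all pb; rewrite Dpb D1 // ler_expR ler_pM2r // lerN2 gerDl => hle.
  have hge : 0 <= (t - pb) ^+ 2 / s by rewrite divr_ge0 // sqr_ge0.
  have /eqP : (t - pb) ^+ 2 / s = 0 by apply/eqP; rewrite eq_le hle hge.
  by rewrite mulf_eq0 invr_eq0 (negPf sn0) orbF sqrf_eq0 subr_eq0 => /eqP.
move=> ->; split; first by rewrite Dpb expR_gt0.
move=> u; case: (boolP (obs u <= Sigma)%MS) => h.
  rewrite D1 // Dpb ler_expR ler_pM2r // lerN2 lerDl.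
  by rewrite divr_ge0 // sqr_ge0.
by rewrite D0 // Dpb; apply: ltW; apply: expR_gt0.
Qed.




Theorem lemma3p1 (R : realType) (d n k : nat) (D : 'M[R]_(d, n)) (x : 'cV[R]_d)
  (r : 'I_n -> R) (pi : 'I_k -> 'I_n) :
  D^T *m D = 1%:M ->
  ipomp_sel D x pi ->
  let S := [set pi j | j : 'I_k] in
  is_topk D x k S /\
  (forall t : R, is_MLE D x pi r t <-> t = \sum_(i in S) ip (col i D) x * r i).
Proof.
move=> DD sel S; split; first exact: topk_part.
have inj := sel.1.
pose E := \matrix_(i < d, j < k) D i (pi j).
have EE : E^T *m E = 1%:M.
  apply/matrixP => i j; rewrite !mxE.
  have : (D^T *m D) (pi i) (pi j) = (1%:M : 'M[R]_n) (pi i) (pi j) by rewrite DD.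
  rewrite !mxE (inj_eq inj) => <-.
  by apply: eq_bigr => l _; rewrite !mxE.
have pbE : (\row_(j < k) r (pi j) *m (E^T *m x)) 0 0 =
           \sum_(i in S) ip (col i D) x * r i.
  rewrite /S big_imset /=; last by move=> a b _ _ /inj.
  rewrite mxE; apply: eq_big => // j _; rewrite [RHS]mulrC /ip !mxE; congr (_ * _).
  by apply: eq_bigr => l _; rewrite !mxE.
move=> t; rewrite -pbE; exact: (@mle_gen R d k x E (\row_(j < k) r (pi j)) t EE).
Qed.
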